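(* During the execution of DASH (described in the context) on an initially connected graph, for any node $v$, the quantity $\mathrm{rem}(v)$ does not decrease over any round (a node deletion followed by DASH's healing) in which $v$ is not the deleted node.
   Context: Model: a network is an undirected graph, initially a connected graph $G_0$ on $n$ nodes. In each round an adversary deletes one surviving node $v$ with its incident edges, and then DASH adds edges. $G$ is the current network; $E'$ is the set of healing edges added so far whose endpoints both survive; $G'=(V(G),E')$. $N(u,G)$, $N(u,G')$ are neighbor sets in $G$, $G'$; $\delta(u)=\deg_G(u)-\deg_{G_0}(u)$. DASH: initially every node receives an ID drawn independently and uniformly from $[0,1]$ (its initial ID). When $v$ is deleted (quantities evaluated just before the deletion): partition the nodes of $N(v,G)$ whose current ID differs from that of $v$ into classes of equal current ID; $UN(v,G)$ consists of one node per class, the one with lowest initial ID. Let $S=UN(v,G)\cup N(v,G')$. Order $S$ by increasing $\delta$ and place it in this order into a complete binary tree with $|S|$ positions, filled level by level from the top and left to right; add to the network and to $E'$ the edge between each node of $S$ and the node at its parent position. Then all nodes of the component of $G'$ containing $S$ set their ID to the minimum current ID in $S$. Weights: every node $u$ has weight $w(u)$, initially $1$; when a node $v$ is deleted, $w(v)$ is added to the weight of an arbitrarily chosen node of $N(v,G')$. For a subgraph $H$, $W(H)$ is the sum of the weights of its vertices. For distinct surviving nodes $x,y$, $T(x,y)$ is the connected component of $G'-y$ containing $x$. Define $\mathrm{rem}(v)=\sum_{u\in N(v,G')}W(T(u,v))-\max_{u\in N(v,G')}W(T(u,v))+w(v)$ (the maximum over the empty set being $0$). *)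

(* Defs.v *)
From HB Require Import structures.
From mathcomp Require Import all_boot all_order all_algebra.
From mathcomp Require Import reals.

Set Implicit Arguments.
Unset Strict Implicit.
Unset Printing Implicit Defensive.

Import Order.TTheory GRing.Theory Num.Theory.

Section Dash.
(* T : the node set; e0 : edge relation of G_0; id0 : initial IDs. *)
Variables (T : finType) (R : realType) (e0 : rel T) (id0 : T -> R).

(* State of the execution: surviving nodes V(G), edge set of G (stored
   symmetrically as ordered pairs), the set E' of healing edges (also
   symmetric), current IDs and weights. *)
Record state := State {
  alive : {set T};
  gE    : {set T * T};
  hE    : {set T * T};
  cid   : T -> R;
  wt    : T -> nat }.

Definition nbr (A : {set T}) (E : {set T * T}) (u : T) : {set T} :=
  [set x in A | (u, x) \in E].

Definition N_G (st : state) u := nbr (alive st) (gE st) u.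
Definition N_H (st : state) u := nbr (alive st) (hE st) u.

Definition deg0 (u : T) : nat := #|[set x | e0 u x]|.

Definition delta (st : state) (u : T) : int :=
  ((#|N_G st u|)%:Z - (deg0 u)%:Z)%R.

(* UN(v,G): one node per class of equal current ID (different from v's),
   namely the one with lowest initial ID. *)
Definition UN (st : state) (v : T) : {set T} :=
  [set u in N_G st v | (cid st u != cid st v) &&
     [forall u' in N_G st v, (cid st u' == cid st u) ==> (id0 u <= id0 u')%R]].

Definition Sset (st : state) (v : T) : {set T} := UN st v :|: N_H st v.

(* edges of the complete binary tree on the sequence s (0-indexed position
   i >= 1 has parent position (i-1)/2). d is an unused default. *)
Definition tree_edges (s : seq T) (d : T) : {set T * T} :=
  [set p in [seq (nth d s i, nth d s (i.-1)./2) | i <- iota 1 (size s).-1]].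

Definition symE (E : {set T * T}) : {set T * T} :=
  E :|: [set (p.2, p.1) | p in E].

Definition restrict (A : {set T}) (E : {set T * T}) : {set T * T} :=
  [set p in E | (p.1 \in A) && (p.2 \in A)].

Definition hrel (E : {set T * T}) : rel T := fun x y => (x, y) \in E.

(* One round: the adversary deletes v; c is the arbitrarily chosen node
   receiving w(v) (None iff N(v,G') is empty); s is the ordering of S by
   increasing delta (ties broken arbitrarily). *)
Definition step (st : state) (v : T) (c : option T) (s : seq T)
    (st' : state) : Prop :=
  [/\ v \in alive st,
      match c with
      | Some c0 => c0 \in N_H st v
      | None => N_H st v = set0
      end,
      perm_eq s (enum (Sset st v)),
      sorted (fun a b => (delta st a <= delta st b)%R) s &
      st' =
        let A' := alive st :\ v in
        let TE := symE (tree_edges s v) in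
        let H' := restrict A' (hE st) :|: TE in
        State A' (restrict A' (gE st) :|: TE) H'
          (fun u =>
             match [pick m in Sset st v |
                     [forall y in Sset st v, (cid st m <= cid st y)%R]] with
             | Some m =>
                 if [exists y in Sset st v, connect (hrel H') y u]
                 then cid st m else cid st u
             | None => cid st u
             end)
          (fun u => (wt st u + (if c == Some u then wt st v else 0))%N)].

Definition init : state :=
  State setT [set p | e0 p.1 p.2] set0 id0 (fun _ => 1%N).

Inductive reachable : state -> Prop :=
| reach0 : reachable init
| reachS st v c s st' : reachable st -> step st v c s st' -> reachable st'.

(* W(T(u,v)): total weight of the component of G' - v containing u. *)
Definition compW (st : state) (v u : T) : nat :=
  \sum_(x in alive st |
        connect (fun a b => [&& (a, b) \in hE st, a != v & b != v]) u x)
    wt st x.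

Definition remv (st : state) (v : T) : nat :=
  (\sum_(u in N_H st v) compW st v u - \max_(u in N_H st v) compW st v u
   + wt st v)%N.

End Dash.

(* Main.v *)
Require Import Defs.
From HB Require Import structures.
From mathcomp Require Import all_boot all_order all_algebra.
From mathcomp Require Import reals.
From mathcomp Require Import zify.

Set Implicit Arguments.
Unset Strict Implicit.
Unset Printing Implicit Defensive.
Import Order.TTheory GRing.Theory Num.Theory.


Section Graph.
Variable T : finType.

Lemma connect_ind' (e : rel T) (Q : T -> Prop) a :
  Q a -> (forall y z, connect e a y -> Q y -> e y z -> Q z) ->
  forall z, connect e a z -> Q z.
Proof.
move=> Qa st z /connectP [p pth ->].
suff H : forall b, connect e a b -> Q b -> path e b p -> Q (last b p).
  by apply: H => //; apply: connect0.
elim: p {pth} => [|y p IH] b cab Qb //= /andP [eby pth].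
apply: IH => //; first by apply: connect_trans cab (connect1 eby).
by apply: (st b).
Qed.

Lemma connect_symm (e : rel T) : symmetric e -> forall a b, connect e a b -> connect e b a.
Proof. by move=> se a b; rewrite (sym_connect_sym se). Qed.

Lemma connect_mono (e e' : rel T) : (forall a b, e a b -> e' a b) ->
  forall a b, connect e a b -> connect e' a b.
Proof. move=> sub; apply: connect_sub => a b /sub; exact: connect1. Qed.

Lemma connect_last (e : rel T) a b : connect e a b -> a != b -> exists y, e y b.
Proof.
move=> cab nab.
have : a = b \/ exists y, e y b.
  apply: (connect_ind' (Q := fun z => a = z \/ exists y, e y z)) cab; first by left.
  by move=> y z _ _ eyz; right; exists y.
by case=> // eab; rewrite eab eqxx in nab.
Qed.

Lemma first_hit (e : rel T) t v : connect e t v -> t != v ->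
  exists n, e n v /\ connect (fun a b => [&& e a b, a != v & b != v]) t n.
Proof.
move=> ctv ntv.
set av := (fun a b => [&& e a b, a != v & b != v]).
have avne : forall z, connect av t z -> z != v.
  apply: connect_ind' => // y z _ _ /and3P [] //.
have : connect av t v \/ exists n, e n v /\ connect av t n.
  apply: (connect_ind' (Q := fun z => connect av t z \/ exists n, e n v /\ connect av t n)) ctv.
    by left; apply: connect0.
  move=> y z _ [cy|h] eyz; last by right.
  have yv := avne _ cy.
  case: (eqVneq z v) => [zv|zv]; first by right; exists y; rewrite -zv.
  left; apply: connect_trans cy (connect1 _); by rewrite /av eyz yv zv.
by case=> // /avne; rewrite eqxx.
Qed.

End Graph.


Section Tree.
Variable T : finType.

Definition ebr (E : {set T * T}) (a b : T) : rel T :=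
  fun y z => [&& (y, z) \in E, (y, z) != (a, b) & (y, z) != (b, a)].

Lemma ebrC (E : {set T * T}) a b y z : ebr E a b y z = ebr E b a y z.
Proof. by rewrite /ebr; case: ((y,z) \in E) => //=; rewrite andbC. Qed.

Lemma ebr_sym (E : {set T * T}) a b : (forall y z, (y,z) \in E -> (z,y) \in E) -> symmetric (ebr E a b).
Proof.
move=> sE y z; rewrite /ebr.
have H : forall y z, ebr E a b y z -> ebr E a b z y.
  move=> y' z' /and3P [h1 h2 h3]; apply/and3P; split; first exact: sE.
    by move: h3; rewrite !xpair_eqE andbC.
  by move: h2; rewrite !xpair_eqE andbC.
by apply/idP/idP; apply: H.
Qed.

Lemma in_symE (E : {set T * T}) y z : ((y, z) \in symE E) = ((y,z) \in E) || ((z,y) \in E).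
Proof.
rewrite /symE in_setU; congr (_ || _); apply/imsetP/idP => [[p pE [-> ->]]|h].
  by case: p pE.
by exists (z, y).
Qed.

Definition pa (i : nat) := (i.-1)./2.

Lemma pa_lt i : 0 < i -> pa i < i.
Proof. move=> i0; rewrite /pa ltn_half_double; lia. Qed.

Lemma pa_le i : pa i <= i.
Proof. by case: i => // i; apply: ltnW; apply: pa_lt. Qed.

Lemma in_tree (s : seq T) d y z :
  ((y, z) \in tree_edges s d) <->
  exists i, [/\ 0 < i, i < size s, y = nth d s i & z = nth d s (pa i)].
Proof.
rewrite /tree_edges inE; split.
  case/mapP => i; rewrite mem_iota => /andP [i1 i2] [-> ->].
  by exists i; split => //; lia.
case=> i [i1 i2 -> ->]; apply/mapP; exists i => //; rewrite mem_iota; lia.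
Qed.

Lemma tree_sym (s : seq T) d y z : (y,z) \in symE (tree_edges s d) -> (z,y) \in symE (tree_edges s d).
Proof. by rewrite !in_symE orbC. Qed.

Lemma tree_mem (s : seq T) d y z : (y,z) \in symE (tree_edges s d) -> (y \in s) && (z \in s).
Proof.
rewrite in_symE => /orP [] /in_tree [i [i1 i2 -> ->]];
  rewrite !mem_nth //; apply: leq_ltn_trans (pa_le i) i2.
Qed.

Lemma tree_conn0 (s : seq T) d i : i < size s ->
  connect (hrel (symE (tree_edges s d))) (nth d s i) (nth d s 0).
Proof.
elim: i {-2}i (leqnn i) => [|n IH] i lin isz.
  by have -> : i = 0 by lia.
case: (posnP i) => [->|ip]; first by apply: connect0.
apply: connect_trans (IH (pa i) _ _).
- apply: connect1; rewrite /hrel in_symE; apply/orP; left; apply/in_tree.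
  by exists i.
- have := pa_lt ip; lia.
- apply: leq_ltn_trans (pa_le i) isz.
Qed.

Lemma tree_conn (s : seq T) d a b : a \in s -> b \in s ->
  connect (hrel (symE (tree_edges s d))) a b.
Proof.
move=> ai bi.
have sy : symmetric (hrel (symE (tree_edges s d))).
  by move=> y z; apply/idP/idP; apply: tree_sym.
rewrite -(nth_index d ai) -(nth_index d bi).
apply: connect_trans (tree_conn0 d _) _; first by rewrite index_mem.
by apply: connect_symm => //; apply: tree_conn0; rewrite index_mem.
Qed.

Lemma iter_pa_le j k : iter j pa k <= k.
Proof. elim: j => //= j IH; apply: leq_trans (pa_le _) IH. Qed.

Lemma tree_bridge (s : seq T) d a b : uniq s -> (a, b) \in symE (tree_edges s d) ->
  ~~ connect (ebr (symE (tree_edges s d)) a b) a b.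
Proof.
move=> us.
set E := symE (tree_edges s d).
have key : forall i, 0 < i < size s ->
   ~~ connect (ebr E (nth d s i) (nth d s (pa i))) (nth d s i) (nth d s (pa i)).
  move=> i /andP [i1 i2].
  pose D := fun z => exists k, [/\ k < size s, nth d s k = z & exists j, iter j pa k = i].
  have clos : forall y z, ebr E (nth d s i) (nth d s (pa i)) y z -> D y -> D z.
    move=> y z /and3P [yzE n1 n2] [k [ks yk [j hj]]].
    move: yzE; rewrite in_symE => /orP [] /in_tree [k' [k1 k2 ey ez]].
    - have kk : k = k'.
        by apply/eqP; rewrite -(nth_uniq d ks k2 us) yk ey.
      subst k' y z.
      case: j hj => [/= hk|j hj].
        by subst k; rewrite eqxx in n1.
      exists (pa k); split => //; first by apply: leq_ltn_trans (pa_le k) ks.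
      by exists j; rewrite -iterSr.
    - have kk : k = pa k'.
        have pk : pa k' < size s by apply: leq_ltn_trans (pa_le k') k2.
        by apply/eqP; rewrite -(nth_uniq d ks pk us) yk ez.
      subst k y z.
      by exists k'; split => //; exists j.+1; rewrite iterSr.
  have Di : D (nth d s i) by exists i; split => //; exists 0.
  have nDp : ~ D (nth d s (pa i)).
    case=> k [ks hk [j hj]].
    have kp : k = pa i.
      have pk : pa i < size s by apply: leq_ltn_trans (pa_le i) i2.
      by apply/eqP; rewrite -(nth_uniq d ks pk us) hk.
    subst k; have := iter_pa_le j (pa i); have := pa_lt i1; lia.
  apply/negP => c; apply: nDp.
  by apply: (connect_ind' (Q := D)) c => // y z _ Dy e; apply: clos e Dy.
rewrite in_symE => /orP [] /in_tree [i [i1 i2 -> ->]].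
  by apply: key; rewrite i1.
have sy : symmetric (ebr E (nth d s i) (nth d s (pa i))).
  by apply: ebr_sym => y z; apply: tree_sym.
apply/negP => c; have := key i; rewrite i1 i2 => /(_ isT) /negP; apply.
apply: connect_symm => //.
by rewrite -(eq_connect (@ebrC _ _ _)).
Qed.

End Tree.


Section Inv.
Variables (T : finType) (R : realType) (id0 : T -> R).

Definition avoid (E : {set T * T}) (v : T) : rel T :=
  fun a b => [&& (a, b) \in E, a != v & b != v].

Record Inv (st : state T R) : Prop := {
  i_sym : forall a b, (a,b) \in hE st -> (b,a) \in hE st;
  i_dom : forall a b, (a,b) \in hE st -> (a \in alive st) && (b \in alive st);
  i_gloop : forall a, (a,a) \notin gE st;
  i_br : forall a b, (a,b) \in hE st -> ~~ connect (ebr (hE st) a b) a b;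
  i_cid : forall a b, connect (hrel (hE st)) a b -> cid st a = cid st b }.

Variable st : state T R.
Hypothesis I : Inv st.

Lemma noloop a : (a, a) \notin hE st.
Proof. by apply/negP => h; have := i_br I h; rewrite connect0. Qed.

Lemma avoid_sym v : symmetric (avoid (hE st) v).
Proof.
move=> y z; rewrite /avoid; apply/and3P/and3P => -[h1 h2 h3]; split => //;
  exact: (i_sym I).
Qed.

Lemma hrel_sym : symmetric (hrel (hE st)).
Proof. by move=> y z; apply/idP/idP; apply: (i_sym I). Qed.

Lemma avoid_hrel v a b : connect (avoid (hE st) v) a b -> connect (hrel (hE st)) a b.
Proof. by apply: connect_mono => y z /and3P []. Qed.

Lemma forest v u1 u2 : (v, u1) \in hE st -> (v, u2) \in hE st ->
  connect (avoid (hE st) v) u1 u2 -> u1 = u2.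
Proof.
move=> h1 h2 c; apply/eqP/negPn/negP => n12.
have := i_br I (i_sym I h1); rewrite /is_true => /negP; apply.
have u2v : u2 != v by apply/eqP => e; subst u2; have := noloop v; rewrite h2.
apply: connect_trans (connect1 (_ : ebr _ u1 v u2 v)).
  apply: connect_mono c => y z /and3P [yz yv zv]; apply/and3P; split => //.
    by rewrite xpair_eqE (negbTE zv) andbF.
  by rewrite xpair_eqE (negbTE yv).
apply/and3P; split; first exact: (i_sym I).
  by rewrite xpair_eqE eq_sym (negbTE n12).
by rewrite xpair_eqE (negbTE u2v).
Qed.

Lemma inNH u v : (u \in N_H st v) = ((v, u) \in hE st).
Proof.
rewrite /N_H /nbr inE; case h: ((v,u) \in hE st); last by rewrite andbF.
by have /andP [_ ->] := i_dom I h.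
Qed.

End Inv.


Section Step.
Variables (T : finType) (R : realType) (id0 : T -> R).
Hypothesis id0inj : injective id0.
Variables (st : state T R) (x : T) (s : seq T).
Hypothesis I : Inv st.
Hypothesis xA : x \in alive st.
Hypothesis hp : perm_eq s (enum (Sset id0 st x)).

Definition A' := alive st :\ x.
Definition S := Sset id0 st x.
Definition TE := symE (tree_edges s x).
Definition Hx := restrict A' (hE st).
Definition H' := Hx :|: TE.

Lemma memS y : (y \in s) = (y \in S).
Proof. by rewrite (perm_mem hp) mem_enum. Qed.

Lemma us : uniq s.
Proof. by rewrite (perm_uniq hp) enum_uniq. Qed.

Lemma inS y : (y \in S) = (y \in UN id0 st x) || ((x, y) \in hE st).
Proof. by rewrite /S /Sset in_setU (inNH I). Qed.

Lemma inUN y : (y \in UN id0 st x) =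
  [&& y \in N_G st x, cid st y != cid st x &
     [forall u' in N_G st x, (cid st u' == cid st y) ==> (id0 y <= id0 u')%R]].
Proof. by rewrite /UN inE. Qed.

Lemma inNG y : (y \in N_G st x) = (y \in alive st) && ((x, y) \in gE st).
Proof. by rewrite /N_G /nbr inE. Qed.

Lemma S_alive y : y \in S -> y \in A'.
Proof.
rewrite inS inUN inNG /A' in_setD1 => /orP [/and3P [/andP [h1 h2] _ _]|h].
  by rewrite h1 andbT; apply/eqP => e; subst y; have := i_gloop I x; rewrite h2.
have /andP [_ ->] := i_dom I h; rewrite andbT.
by apply/eqP => e; subst y; have := noloop I x; rewrite h.
Qed.

Lemma inHx y z : ((y, z) \in Hx) = [&& (y, z) \in hE st, y != x & z != x].
Proof.
rewrite /Hx /restrict /A' !inE /=.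
case h: ((y,z) \in hE st) => //=.
by have /andP [-> ->] := i_dom I h; rewrite !andbT.
Qed.

Lemma Hx_sym y z : (y, z) \in Hx -> (z, y) \in Hx.
Proof. by rewrite !inHx => /and3P [h1 h2 h3]; rewrite h2 h3 (i_sym I h1). Qed.

Lemma TE_S y z : (y, z) \in TE -> (y \in S) && (z \in S).
Proof. by move/tree_mem; rewrite !memS. Qed.

Lemma TE_sym y z : (y, z) \in TE -> (z, y) \in TE.
Proof. exact: tree_sym. Qed.

Lemma inH' y z : ((y, z) \in H') = ((y, z) \in Hx) || ((y, z) \in TE).
Proof. by rewrite /H' in_setU. Qed.

Lemma H'_sym y z : (y, z) \in H' -> (z, y) \in H'.
Proof. by rewrite !inH' => /orP [/Hx_sym -> | /TE_sym ->]; rewrite ?orbT. Qed.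

Lemma Hx_H y z : connect (hrel Hx) y z -> connect (hrel (hE st)) y z.
Proof. by apply: connect_mono => a b; rewrite /hrel inHx => /and3P []. Qed.

Lemma Hx_avoid y z : connect (hrel Hx) y z -> connect (avoid (hE st) x) y z.
Proof. by apply: connect_mono => a b; rewrite /hrel inHx. Qed.

Lemma cid_NH y : (x, y) \in hE st -> cid st y = cid st x.
Proof. by move=> h; symmetry; apply: (i_cid I); apply: connect1. Qed.

Lemma claimC s1 s2 : s1 \in S -> s2 \in S -> connect (hrel Hx) s1 s2 -> s1 = s2.
Proof.
move=> h1 h2 c.
have ceq := i_cid I (Hx_H c).
move: h1 h2; rewrite !inS => /orP [u1|n1] /orP [u2|n2].
- move: u1 u2; rewrite !inUN => /and3P [m2 _ f1] /and3P [m1 _ f2].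
  apply: id0inj; apply/eqP; rewrite eq_le.
  move/forallP: f1 => /(_ s2); rewrite m1 ceq eqxx /= => ->.
  by move/forallP: f2 => /(_ s1); rewrite m2 ceq eqxx /= => ->.
- by move: u1; rewrite inUN ceq (cid_NH n2) eqxx /= !andbF.
- by move: u2; rewrite inUN -ceq (cid_NH n1) eqxx /= !andbF.
- by apply: (forest I n1 n2); apply: Hx_avoid.
Qed.

Lemma TE_noloop a : (a, a) \notin TE.
Proof.
apply/negP => h; have := tree_bridge us h.
by rewrite connect0.
Qed.

Lemma br_TE a b : (a, b) \in TE -> ~~ connect (ebr H' a b) a b.
Proof.
move=> ab; apply/negP => c.
have := tree_bridge us ab; rewrite /is_true => /negP; apply.
have aS : a \in S by have /andP [] := TE_S ab.
have bS : b \in S by have /andP [] := TE_S ab.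
have : exists2 d, d \in S & connect (ebr TE a b) a d /\ connect (hrel Hx) b d.
  apply: (connect_ind' (Q := fun z => exists2 d, d \in S &
           connect (ebr TE a b) a d /\ connect (hrel Hx) z d)) c.
    by exists a => //; split; apply: connect0.
  move=> y z _ [d dS [c1 c2]] /and3P [yz n1 n2].
  move: yz; rewrite inH' => /orP [yz|yz].
    exists d => //; split => //; apply: connect_trans c2.
    by apply: connect1; apply: Hx_sym.
  have /andP [yS zS] := TE_S yz.
  have yd := claimC yS dS c2; subst d.
  exists z => //; split; last by apply: connect0.
  by apply: connect_trans c1 (connect1 _); rewrite /ebr yz n1 n2.
case=> d dS [c1 c2]; have bd := claimC bS dS c2; subst d; exact: c1.
Qed.

Lemma ebr_Hx_H a b y z : ebr Hx a b y z -> ebr (hE st) a b y z.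
Proof. by rewrite /ebr inHx => /and3P [/and3P [h _ _] n1 n2]; rewrite h n1 n2. Qed.

Lemma br_G a b : (a, b) \in Hx -> ~~ connect (ebr Hx a b) a b ->
  (forall d, d \in S -> connect (hrel Hx) a d -> connect (ebr Hx a b) a d) ->
  ~~ connect (ebr H' a b) a b.
Proof.
move=> ab nb hyp; apply/negP => c.
have : connect (ebr Hx a b) a b \/ ~ connect (hrel Hx) a b.
  apply: (connect_ind' (Q := fun z => connect (ebr Hx a b) a z \/
                                      ~ connect (hrel Hx) a z)) c; first by left; apply: connect0.
  move=> y z _ Qy /and3P [yz n1 n2].
  move: yz; rewrite inH' => /orP [yz|yz].
    case: Qy => [cy|ncy]; first by left; apply: connect_trans cy (connect1 _); rewrite /ebr yz n1 n2.
    right => cz; apply: ncy; apply: connect_trans cz (connect1 _); exact: Hx_sym.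
  have /andP [_ zS] := TE_S yz.
  case: (boolP (connect (hrel Hx) a z)) => cz; first by left; apply: hyp.
  by right.
case=> [cb|]; first by rewrite cb in nb.
by apply; apply: connect1.
Qed.

Lemma ebrHx_sym a b : symmetric (ebr Hx a b).
Proof. by apply: ebr_sym => y z; apply: Hx_sym. Qed.

Lemma ebrH'_sym a b : symmetric (ebr H' a b).
Proof. by apply: ebr_sym => y z; apply: H'_sym. Qed.

Lemma br_Hx a b : (a, b) \in Hx -> ~~ connect (ebr H' a b) a b.
Proof.
move=> ab.
have nbo : forall a b, (a, b) \in Hx -> ~~ connect (ebr Hx a b) a b.
  move=> a0 b0 h; apply/negP => c; have := i_br I (_ : (a0, b0) \in hE st).
  rewrite /is_true => /(_ _)/negP; apply.
    by move: h; rewrite inHx => /and3P [].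
  by apply: connect_mono c => y z; apply: ebr_Hx_H.
have split : forall z, connect (hrel Hx) a z ->
    connect (ebr Hx a b) a z \/ connect (ebr Hx a b) b z.
  apply: connect_ind'; first by left; apply: connect0.
  move=> y z _ Qy yz.
  case: (boolP (ebr Hx a b y z)) => e.
    by case: Qy => c; [left|right]; apply: connect_trans c (connect1 e).
  move: e; rewrite /ebr (yz : (y, z) \in Hx) /= negb_and !negbK => /orP [] /eqP [_ ->].
    by right; apply: connect0.
  by left; apply: connect0.
case: (boolP [exists d, [&& d \in S, connect (hrel Hx) a d &
                             ~~ connect (ebr Hx a b) a d]]).
  case/existsP => d /and3P [dS cad ncd].
  have cbd : connect (ebr Hx a b) b d by case: (split d cad) => // h; rewrite h in ncd.
  have ba : (b, a) \in Hx by apply: Hx_sym.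
  have := br_G ba (nbo _ _ ba).
  have -> : connect (ebr H' b a) b a = connect (ebr H' a b) a b.
    rewrite (eq_connect (@ebrC _ _ b a)).
    by apply/idP/idP; apply: connect_symm; apply: ebrH'_sym.
  apply => d' d'S cbd'.
  have cad' : connect (hrel Hx) a d'.
    by apply: connect_trans cbd'; apply: connect1.
  have dd : d' = d.
    apply: (claimC d'S dS); apply: connect_trans cad.
    by apply: connect_symm cad' => y z; apply/idP/idP; apply: Hx_sym.
  subst d'; by rewrite (eq_connect (@ebrC _ _ b a)).
move=> h; apply: br_G ab (nbo _ _ ab) _ => d dS cad.
case: (boolP (connect (ebr Hx a b) a d)) => // ncd.
by move: h; rewrite negb_exists => /forallP /(_ d); rewrite dS cad ncd.
Qed.


Lemma H'_hsym : symmetric (hrel H').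
Proof. by move=> y z; apply/idP/idP; apply: H'_sym. Qed.

Lemma noS a b : ~ (exists2 y, y \in S & connect (hrel H') y a) ->
  connect (hrel H') a b -> connect (hrel Hx) a b.
Proof.
move=> nS cab.
apply: (connect_ind' (Q := fun z => connect (hrel Hx) a z)) cab; first by apply: connect0.
move=> y z cay cy; rewrite /hrel inH' => /orP [yz|yz].
  by apply: connect_trans cy (connect1 _).
have /andP [yS _] := TE_S yz.
by case: nS; exists y => //; apply: connect_symm cay; apply: H'_hsym.
Qed.

Definition cid' := fun u =>
  match [pick m in S | [forall y in S, (cid st m <= cid st y)%R]] with
  | Some m => if [exists y in S, connect (hrel H') y u] then cid st m else cid st u
  | None => cid st u
  end.

Lemma cid_pres a b : connect (hrel H') a b -> cid' a = cid' b.
Proof.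
move=> cab.
have old : ~ (exists2 y, y \in S & connect (hrel H') y a) ->
           cid st a = cid st b.
  by move=> nS; apply: (i_cid I); apply: Hx_H; apply: noS.
rewrite /cid'; case: pickP => [m _|none].
  case: (boolP [exists y in S, connect (hrel H') y a]) => ea.
    suff -> : [exists y in S, connect (hrel H') y b] by [].
    case/exists_inP: ea => y yS cya; apply/exists_inP; exists y => //.
    exact: connect_trans cya cab.
  case: (boolP [exists y in S, connect (hrel H') y b]) => eb.
    case/negP: ea; case/exists_inP: eb => y yS cyb; apply/exists_inP; exists y => //.
    by apply: connect_trans cyb _; apply: connect_symm cab; apply: H'_hsym.
  apply: old => -[y yS cya]; case/negP: ea; apply/exists_inP; by exists y.
apply: old => -[y0 y0S _].
have := none (Order.arg_min y0 (fun i => i \in S) (cid st)).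
case: arg_minP => // i iS H; rewrite iS /=.
move/negP; apply; apply/forallP => y; apply/implyP => yS; exact: (H y yS).
Qed.

Section Key.
Variable c : option T.
Hypothesis hc : match c with Some c0 => is_true (c0 \in N_H st x) | None => N_H st x = set0 end.
Variable v : T.
Hypothesis vx : v != x.

Local Notation P := (connect (avoid (hE st) v)).
Local Notation P' := (connect (avoid H' v)).
Local Notation N := (N_H st v).
Local Notation N' := (nbr A' H' v).

Lemma inN' u : (u \in N') = (u \in A') && ((v, u) \in H').
Proof. by rewrite /nbr inE. Qed.

Lemma Psym : symmetric (avoid (hE st) v).
Proof. exact: avoid_sym. Qed.

Lemma P'sym : symmetric (avoid H' v).
Proof.
move=> y z; rewrite /avoid; apply/and3P/and3P => -[h1 h2 h3]; split => //;
  exact: H'_sym.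
Qed.

Lemma lift_edge y z : avoid (hE st) v y z -> y != x -> z != x -> avoid H' v y z.
Proof.
rewrite /avoid => /and3P [h yv zv] yx zx; rewrite yv zv inH' inHx h yx zx //.
Qed.

Lemma NN' u : u \in N -> u != x -> u \in N'.
Proof.
rewrite (inNH I) inN' inH' inHx => h ux.
have /andP [vA uA] := i_dom I h.
by rewrite /A' in_setD1 ux uA h vx.
Qed.

Lemma L_keep u : u \in N -> ~~ P u x -> forall y, P u y -> P' u y.
Proof.
move=> uN nux y puy.
apply: (connect_ind' (Q := fun z => P' u z)) puy; first by apply: connect0.
move=> a b pua p'ua ab.
have ax : a != x by apply/eqP => e; subst a; rewrite pua in nux.
have bx : b != x.
  by apply/eqP => e; subst b; have := connect_trans pua (connect1 ab); rewrite (negbTE nux).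
by apply: connect_trans p'ua (connect1 _); apply: lift_edge.
Qed.

Lemma uniq_x u u1 : u \in N -> u1 \in N -> P u x -> P u1 x -> u = u1.
Proof.
rewrite !(inNH I) => h h1 pu pu1; apply: (forest I h h1).
by apply: connect_trans pu _; apply: connect_symm pu1; apply: Psym.
Qed.

Lemma cid_vx u1 : u1 \in N -> P u1 x -> cid st v = cid st x.
Proof.
rewrite (inNH I) => h p; apply: (i_cid I); apply: connect_trans (connect1 _) (avoid_hrel p).
exact: h.
Qed.

Lemma notUN_v : cid st v = cid st x -> v \notin UN id0 st x.
Proof. by move=> e; rewrite inUN e eqxx /= andbF. Qed.

Lemma TE_P' (vS : v \notin S) t1 t2 : connect (hrel TE) t1 t2 -> P' t1 t2.
Proof.
apply: connect_mono => y z h; have /andP [yS zS] := TE_S h.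
rewrite /avoid inH' (h : (y, z) \in TE) orbT.
have yv : y != v by apply/eqP => e; rewrite -e yS in vS.
have zv : z != v by apply/eqP => e; rewrite -e zS in vS.
by rewrite yv zv.
Qed.

Lemma L_through u1 : u1 \in N -> P u1 x -> u1 != x -> (x, v) \notin hE st ->
  forall y, P u1 y -> y != x -> P' u1 y.
Proof.
move=> u1N pu1 u1x nxv.
have vS : v \notin S by rewrite inS (negbTE (notUN_v (cid_vx u1N pu1))) (negbTE nxv).
have TS : forall t1 t2, t1 \in S -> t2 \in S -> P' t1 t2.
  move=> t1 t2 h1 h2; apply: TE_P' => //; apply: tree_conn; by rewrite memS.
move=> y py.
suff : (y != x -> P' u1 y) /\ (y = x -> forall t, t \in S -> P' u1 t) by case.
apply: (connect_ind' (Q := fun z => (z != x -> P' u1 z) /\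
                                    (z = x -> forall t, t \in S -> P' u1 t))) py.
  by split; [move=> _; apply: connect0 | move=> e; rewrite e eqxx in u1x].
move=> a b _ [Qa1 Qa2] ab.
have abH : (a, b) \in hE st by case/and3P: ab.
case: (eqVneq a x) => [ax|ax]; case: (eqVneq b x) => [bx|bx].
- by split => [/eqP|_]; [rewrite bx | apply: Qa2].
- have bS : b \in S by rewrite inS -ax abH orbT.
  by split => [_|/eqP]; [apply: Qa2 | rewrite (negbTE bx)].
- have aS : a \in S by rewrite inS -bx (i_sym I abH) orbT.
  split => [/eqP|_ t tS]; first by rewrite bx.
  by apply: connect_trans (Qa1 ax) (TS _ _ aS tS).
- split => [_|/eqP]; last by rewrite (negbTE bx).
  by apply: connect_trans (Qa1 ax) (connect1 _); apply: lift_edge.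
Qed.

Lemma Gt m' : (x, v) \in hE st -> m' \notin S -> forall t, t \in S -> t != v ->
  [exists n in N' :\ m', P' n t].
Proof.
move=> xv mS t tS tv.
have vS : v \in S by rewrite inS xv orbT.
have ctv : connect (hrel TE) t v by apply: tree_conn; rewrite memS.
have [n [nv cn]] := first_hit ctv tv.
have nS : n \in S by have /andP [] := TE_S nv.
apply/exists_inP; exists n.
  rewrite in_setD1 inN' (S_alive nS) inH' (TE_sym nv) orbT !andbT.
  by apply/eqP => e; subst; rewrite nS in mS.
apply: connect_symm; first exact: P'sym.
apply: connect_mono cn => a b /and3P [h av bv]; by rewrite /avoid inH' (h : (a, b) \in TE) orbT av bv.
Qed.

Lemma L_pieces m' : (x, v) \in hE st -> m' \notin S ->
  forall y, P x y -> y != x -> [exists n in N' :\ m', P' n y].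
Proof.
move=> xv mS y pxy.
suff : y = x \/ [exists n in N' :\ m', P' n y] by case => // -> /eqP.
apply: (connect_ind' (Q := fun z => z = x \/ [exists n in N' :\ m', P' n z])) pxy;
  first by left.
move=> a b _ Qa ab.
case: (eqVneq b x) => [->|bx]; first by left.
right; case: (eqVneq a x) => [ax|ax].
  subst a; have /and3P [h _ bv] := ab.
  by apply: (Gt xv mS); rewrite // inS h orbT.
case: Qa => [e|]; first by rewrite e eqxx in ax.
case/exists_inP => n nN pn; apply/exists_inP; exists n => //.
by apply: connect_trans pn (connect1 _); apply: lift_edge.
Qed.


Lemma getc y : (x, y) \in hE st -> exists c0, c = Some c0 /\ (x, c0) \in hE st.
Proof.
move=> h; move: hc; case: c => [c0|] hc'.
  by exists c0; split => //; rewrite (inNH I) in hc'.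
have : y \in N_H st x by rewrite (inNH I).
by rewrite hc' inE.
Qed.

Lemma key m' : exists u0,
 (forall y, y \in alive st -> y != x -> [exists u in N :\ u0, P u y] ->
     [exists u in N' :\ m', P' u y]) /\
 ([exists u in N :\ u0, P u x] -> exists c0, c = Some c0 /\
     (c0 = v \/ (c0 \in alive st :\ x /\ [exists u in N' :\ m', P' u c0]))).
Proof.
case: (boolP [exists u in N, P u x]) => [/exists_inP [u1 u1N pu1]|nex]; last first.
  exists m'; split.
    move=> y yA yx /exists_inP [u]; rewrite in_setD1 => /andP [um uN] puy.
    have nux : ~~ P u x by apply/negP => pux; case/negP: nex; apply/exists_inP; exists u.
    have ux : u != x by apply/eqP => e; subst u; rewrite connect0 in nux.
    apply/exists_inP; exists u; first by rewrite in_setD1 um NN'.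
    exact: L_keep.
  case/exists_inP => u; rewrite in_setD1 => /andP [_ uN] pux.
  by case/negP: nex; apply/exists_inP; exists u.
have cvx := cid_vx u1N pu1.
case: (boolP ((x, v) \in hE st)) => xv.
  have xN : x \in N by rewrite (inNH I) (i_sym I xv).
  have u1x : u1 = x by apply: (uniq_x u1N xN pu1 (connect0 _ _)).
  subst u1.
  have nPx : forall u, u \in N -> u != x -> ~~ P u x.
    by move=> u uN ux; apply/negP => pux; rewrite (uniq_x uN xN pux pu1) eqxx in ux.
  case: (boolP ((m' \in N) && (m' != x))) => hm.
    case/andP: hm => mN mx.
    have mS : m' \notin S.
      rewrite inS inUN negb_or; apply/andP; split.
        have : cid st m' = cid st x.
          rewrite -cvx; symmetry; apply: (i_cid I); apply: connect1.
          by rewrite (inNH I) in mN.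
        by move=> ->; rewrite eqxx /= andbF.
      apply/negP => xm.
      have mv : m' != v by apply/eqP => e; subst m'; have := noloop I v; rewrite -(inNH I) mN.
      have pxm : P x m' by apply: connect1; rewrite /avoid xm mv eq_sym vx.
      have xmP := connect_symm Psym pxm.
      have e := uniq_x mN xN xmP (connect0 _ _).
      by rewrite e eqxx in mx.
    exists m'; split.
      move=> y yA yx /exists_inP [u]; rewrite in_setD1 => /andP [um uN] puy.
      case: (eqVneq u x) => [e|ux].
        subst u; exact: (L_pieces xv mS puy yx).
      apply/exists_inP; exists u; first by rewrite in_setD1 um NN'.
      exact: (L_keep uN (nPx u uN ux)).
    move=> _.
    have [c0 [-> xc0]] := getc xv.
    exists c0; split => //.
    case: (eqVneq c0 v) => [->|c0v]; first by left.
    right; have c0S : c0 \in S by rewrite inS xc0 orbT.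
    split; first exact: (S_alive c0S).
    exact: (Gt xv mS c0S c0v).
  exists x; split.
    move=> y yA yx /exists_inP [u]; rewrite in_setD1 => /andP [ux uN] puy.
    apply/exists_inP; exists u; last exact: (L_keep uN (nPx u uN ux)).
    rewrite in_setD1 NN' // andbT; apply/eqP => e; subst u.
    by rewrite uN ux in hm.
  case/exists_inP => u; rewrite in_setD1 => /andP [ux uN] pux.
  by have := nPx u uN ux; rewrite pux.
have vxH : (v, x) \notin hE st by apply/negP => h; rewrite (i_sym I h) in xv.
have u1x : u1 != x by apply/eqP => e; subst u1; rewrite (inNH I) in u1N; rewrite u1N in vxH.
have nPx : forall u, u \in N -> u != u1 -> ~~ P u x.
  by move=> u uN ux; apply/negP => pux; rewrite (uniq_x uN u1N pux pu1) eqxx in ux.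
have NNx : forall u, u \in N -> u != x.
  by move=> u uN; apply/eqP => e; subst u; rewrite (inNH I) in uN; rewrite uN in vxH.
exists m'; split.
  move=> y yA yx /exists_inP [u]; rewrite in_setD1 => /andP [um uN] puy.
  apply/exists_inP; exists u; first by rewrite in_setD1 um NN' ?NNx.
  case: (eqVneq u u1) => [e|uu1]; first by subst u; exact: (L_through u1N pu1 u1x xv puy yx).
  exact: (L_keep uN (nPx u uN uu1)).
case/exists_inP => u; rewrite in_setD1 => /andP [um uN] pux.
have e := uniq_x uN u1N pux pu1; subst u.
have [y yx] := connect_last pu1 u1x.
have [c0 [-> xc0]] : exists c0, c = Some c0 /\ (x, c0) \in hE st.
  by apply: (getc (y := y)); apply: (i_sym I); case/and3P: yx.
exists c0; split => //; right.
have c0v : c0 != v by apply/eqP => e; subst c0; rewrite xc0 in xv.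
have c0x : c0 != x by apply/eqP => e; subst c0; have := noloop I x; rewrite xc0.
have pc0 : P u1 c0 by apply: connect_trans pu1 (connect1 _); rewrite /avoid xc0 eq_sym vx c0v.
have /andP [_ c0A] := i_dom I xc0.
split; first by rewrite in_setD1 c0x c0A.
apply/exists_inP; exists u1; first by rewrite in_setD1 um NN'.
exact: (L_through u1N pu1 u1x xv pc0 c0x).
Qed.

End Key.

End Step.


Lemma inv_step (T : finType) (R : realType) (e0 : rel T) (id0 : T -> R) :
  injective id0 -> forall st x c s st', Inv st -> step e0 id0 st x c s st' -> Inv st'.
Proof.
move=> inj st x c s st' I [xA hc hp hs ->].
constructor => /=.
- move=> a b h; exact: (@H'_sym _ _ st x s I a b h).
- move=> a b; change (((a, b) \in H' st x s) -> (a \in A' st x) && (b \in A' st x)).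
  rewrite (inH' st x s) => /orP [h|h].
    move: h; rewrite (inHx x I) => /and3P [h ax bx].
    have /andP [aA bA] := i_dom I h.
    by rewrite /A' !in_setD1 ax bx aA bA.
  have /andP [aS bS] := TE_S hp h.
  by rewrite (S_alive I aS) (S_alive I bS).
- move=> a; rewrite in_setU negb_or; apply/andP; split.
    by rewrite /restrict inE negb_and (i_gloop I).
  exact: (TE_noloop hp).
- move=> a b; change (((a, b) \in H' st x s) -> ~~ connect (ebr (H' st x s) a b) a b).
  rewrite (inH' st x s) => /orP [h|h].
    exact: (br_Hx inj I hp h).
  exact: (br_TE inj I hp h).
- move=> a b h; exact: (@cid_pres _ _ id0 st x s I hp a b h).
Qed.

Lemma inv_reach (T : finType) (R : realType) (e0 : rel T) (id0 : T -> R) :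
  irreflexive e0 -> injective id0 -> forall st, reachable e0 id0 st -> Inv st.
Proof.
move=> irr inj st; elim => [|st0 v c s st' _ IH hs]; last exact: (inv_step inj IH hs).
constructor => /=.
- by move=> a b; rewrite inE.
- by move=> a b; rewrite inE.
- by move=> a; rewrite inE /= irr.
- by move=> a b; rewrite inE.
- move=> a b c'.
  have : a = b.
    apply: (connect_ind' (Q := fun z => a = z)) c' => // y z _ _.
    by rewrite /hrel inE.
  by move=> ->.
Qed.


Section Num.
Variable T : finType.

Lemma smm_le (N : {set T}) (f : T -> nat) u0 :
  \sum_(u in N) f u - \max_(u in N) f u <= \sum_(u in N :\ u0) f u.
Proof.
case: (boolP (u0 \in N)) => h.
  rewrite (big_setD1 u0 h) /=.
  have : f u0 <= \max_(u in N) f u by apply: leq_bigmax_cond.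
  lia.
have -> : N :\ u0 = N.
  by apply/setP => u; rewrite in_setD1; case: eqP => // ->; rewrite (negbTE h).
lia.
Qed.

Lemma smm_eq (N : {set T}) (f : T -> nat) (d : T) :
  exists m, \sum_(u in N) f u - \max_(u in N) f u = \sum_(u in N :\ m) f u.
Proof.
case: (set_0Vmem N) => [->|[u0 u0N]].
  exists d; have -> : set0 :\ d = set0 :> {set T} by apply/setP => u; rewrite !inE andbF.
  by rewrite !big_set0.
have : 0 < #|mem N| by apply/card_gt0P; exists u0.
case/(eq_bigmax_cond f) => m mN ->.
by exists m; rewrite (big_setD1 m mN) /= addKn.
Qed.

Lemma sum_exch (X A : {set T}) (P : rel T) (w : T -> nat) :
  \sum_(u in X) \sum_(y in A | P u y) w y =
  \sum_(y in A) \sum_(u in X | P u y) w y.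
Proof.
rewrite (exchange_big_dep (fun y => y \in A)) /=; last by move=> u y _ /andP [].
by apply: eq_bigr => y yA; apply: eq_bigl => u; rewrite yA.
Qed.

Lemma sum_uniq (X A : {set T}) (P : rel T) (w : T -> nat) :
  (forall u1 u2 y, u1 \in X -> u2 \in X -> P u1 y -> P u2 y -> u1 = u2) ->
  \sum_(u in X) \sum_(y in A | P u y) w y =
  \sum_(y in A | [exists u in X, P u y]) w y.
Proof.
move=> un; rewrite sum_exch big_mkcondr /=; apply: eq_bigr => y yA.
case: (boolP [exists u in X, P u y]) => [/exists_inP [u1 u1X P1]|ne].
  rewrite (bigD1 u1) /=; last by rewrite u1X.
  rewrite big1 ?addn0 // => u /andP [/andP [uX Pu] n].
  by rewrite (un _ _ _ uX u1X Pu P1) eqxx in n.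
apply: big_pred0 => u; apply/negP => /andP [uX Pu].
by case/negP: ne; apply/exists_inP; exists u.
Qed.

Lemma sum_ge (X A : {set T}) (P : rel T) (w : T -> nat) :
  \sum_(y in A | [exists u in X, P u y]) w y <=
  \sum_(u in X) \sum_(y in A | P u y) w y.
Proof.
rewrite sum_exch big_mkcondr /=; apply: leq_sum => y yA.
case: (boolP [exists u in X, P u y]) => [/exists_inP [u1 u1X P1]|ne] //.
by rewrite (bigD1 u1) /= ?u1X ?P1 // leq_addr.
Qed.


Lemma weight_ineq (A : {set T}) x v (w : T -> nat) (c : option T) (Yo Yn : pred T) :
  x \in A ->
  (forall y, y \in A -> y != x -> Yo y -> Yn y) ->
  (Yo x -> exists c0, c = Some c0 /\ (c0 = v \/ (c0 \in A :\ x /\ Yn c0))) ->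
  \sum_(y in A | Yo y) w y + w v <=
  \sum_(y in A :\ x | Yn y) (w y + (if c == Some y then w x else 0)) +
  (w v + (if c == Some v then w x else 0)).
Proof.
move=> xA h1 h2.
rewrite big_mkcondr /= (big_setD1 x xA) /= big_split /=.
have s1 : \sum_(y in A :\ x) (if Yo y then w y else 0) <= \sum_(y in A :\ x | Yn y) w y.
  rewrite [X in _ <= X]big_mkcondr /=; apply: leq_sum => y.
  rewrite in_setD1 => /andP [yx yA].
  by case: (boolP (Yo y)) => // /(h1 y yA yx) ->.
case: (boolP (Yo x)) => hx; last by lia.
have [c0 [-> hc0]] := h2 hx.
case: hc0 => [->|[c0A c0Y]]; first by rewrite eqxx; lia.
have : w x <= \sum_(y in A :\ x | Yn y) (if Some c0 == Some y then w x else 0).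
  by rewrite (bigD1 c0) /= ?c0A ?c0Y // eqxx leq_addr.
lia.
Qed.

End Num.


Lemma main_step (T : finType) (R : realType) (e0 : rel T) (id0 : T -> R) :
  injective id0 -> forall st x c s st', Inv st -> step e0 id0 st x c s st' ->
  forall v, v != x -> remv st v <= remv st' v.
Proof.
move=> inj st x c s st' I [xA hc hp hs ->] v vx.
rewrite /remv /=.
set st2 := State _ _ _ _ _.
have [m' em] := smm_eq (N_H st2 v) (compW st2 v) x.
rewrite em.
have [u0 [k1 k2]] := @key _ _ id0 st x s I hp c hc v vx m'.
apply: leq_trans (leq_add (smm_le _ _ u0) (leqnn _)) _.
have E1 : \sum_(u in N_H st v :\ u0) compW st v u =
   \sum_(y in alive st | [exists u in N_H st v :\ u0,
        connect (avoid (hE st) v) u y]) wt st y.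
  rewrite -(@sum_uniq T (N_H st v :\ u0) (alive st) (fun u y => connect (avoid (hE st) v) u y) (wt st)) //.
  move=> u1 u2 y; rewrite !in_setD1 => /andP [_ h1] /andP [_ h2] p1 p2.
  rewrite !(inNH I) in h1 h2; apply: (forest I h1 h2).
  by apply: connect_trans p1 _; apply: connect_symm p2; apply: avoid_sym.
rewrite E1.
apply: leq_trans (weight_ineq (wt st) (c := c) (v := v)
   (Yn := fun y => [exists u in nbr (A' st x) (H' st x s) v :\ m',
        connect (avoid (H' st x s) v) u y]) xA k1 k2) _.
apply: leq_add; last by [].
have := sum_ge (nbr (A' st x) (H' st x s) v :\ m') (A' st x)
   (fun u y => connect (avoid (H' st x s) v) u y) (wt st2).
by [].
Qed.


Theorem lemma2 (T : finType) (R : realType) (e0 : rel T) (id0 : T -> R) :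
  symmetric e0 -> irreflexive e0 -> (forall x y : T, connect e0 x y) ->
  injective id0 -> (forall x : T, (0 <= id0 x)%R /\ (id0 x <= 1)%R) ->
  forall (st : state T R) (x : T) (c : option T) (s : seq T) (st' : state T R),
    reachable e0 id0 st -> step e0 id0 st x c s st' ->
    forall v : T, v != x -> (remv st v <= remv st' v)%N.
Proof.
move=> _ irr _ inj _ st x c s st' rch stp v vx.
exact: (main_step inj (inv_reach irr inj rch) stp vx).
Qed.
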